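(* In the setting described in the context, fix $x\in\operatorname{supp}(\mu)$ and assume: (a) $\sup_{|i-j|\le R}|J_{i,j}|<\infty$ for every $R\ge0$; (b) $K_n(x,x)>0$ for all large $n$; (c) for every $N\ge1$, \[ \lim_{n\to\infty}\ \max_{\substack{n-N\le \ell<n\\ n\le \ell'\le n+N}}\frac{|q_\ell(x)\,p_{\ell'}(x)|}{K_n(x,x)}=0. \] Then $\lim_{n\to\infty}G_n[f](x)=f(x)$ for every polynomial $f\in\mathbb{R}[x]$.
   Context: Let $r\ge1$ and let $\mu_1,\dots,\mu_r$ be positive Borel measures on $\mathbb{R}$ with all moments finite, forming a perfect system: for every $\vec n\in\mathbb{N}_0^r$ there is a monic polynomial $P_{\vec n}$ of degree $|\vec n|=n_1+\dots+n_r$ with $\int x^kP_{\vec n}\,d\mu_j=0$ for $0\le k\le n_j-1$, $1\le j\le r$. Type I polynomials $A_{\vec n}=(A_{\vec n,1},\dots,A_{\vec n,r})$: $\deg A_{\vec n,j}\le n_j-1$, $\sum_j\int x^kA_{\vec n,j}\,d\mu_j=0$ for $0\le k\le|\vec n|-2$, and $=1$ for $k=|\vec n|-1$. Let $\mu$ be a positive measure with $\mu_j\ll\mu$, $w_j=d\mu_j/d\mu$, $Q_{\vec n}=\sum_jA_{\vec n,j}w_j$. Fix a path $(\vec n_\ell)_{\ell\ge0}$ with $|\vec n_\ell|=\ell$, $\vec n_{\ell+1}=\vec n_\ell+\vec e_{i_\ell}$ ($\vec e_j$ the $j$-th unit vector), and set $p_\ell=P_{\vec n_\ell}$, $q_\ell=Q_{\vec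 n_{\ell+1}}$, so that $\int p_\ell q_{\ell'}\,d\mu=\delta_{\ell,\ell'}$. The Christoffel--Darboux kernel is $K_n(x,y)=\sum_{j=0}^{n-1}p_j(x)q_j(y)$. The matrix $J=[J_{\ell,k}]_{\ell,k\ge0}$ is defined by $xp_\ell=\sum_{k=0}^{\ell+1}J_{\ell,k}p_k$, $J_{\ell,k}=0$ for $k>\ell+1$. For bounded measurable $f$ (or polynomial $f$), $x\in\operatorname{supp}(\mu)$ with $K_n(x,x)\ne0$, define $G_n[f](x)=\frac{1}{K_n(x,x)}\int_{\mathbb{R}}K_n(x,y)K_n(y,x)f(y)\,d\mu(y)$. *)

(* Defs.v *)
From HB Require Import structures.
From mathcomp Require Import all_boot all_order all_algebra.
From mathcomp Require Import all_classical all_reals all_analysis.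
Set Implicit Arguments. Unset Strict Implicit. Unset Printing Implicit Defensive.
Import Order.TTheory GRing.Theory Num.Theory.
Import numFieldNormedType.Exports.
Local Open Scope classical_set_scope.
Local Open Scope ring_scope.

Section MOP.
Variable R : realType.
Local Notation RB := (measurableTypeR R).
Local Notation measR := {measure set RB -> \bar R}.
Variable r : nat.

Definition msize (n : 'I_r -> nat) : nat := (\sum_(j < r) n j)%N.

Definition typeII (muj : 'I_r -> measR) (n : 'I_r -> nat) (P : {poly R}) :=
  [/\ P \is monic, size P = (msize n).+1 &
      forall (j : 'I_r) (k : nat), (k < n j)%N ->
        (\int[muj j]_y ((y : R) ^+ k * P.[y])%:E = 0)%E].

Definition perfect (muj : 'I_r -> measR) :=
  forall n : 'I_r -> nat, exists P : {poly R}, typeII muj n P.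

Definition typeI (muj : 'I_r -> measR) (n : 'I_r -> nat)
    (A : 'I_r -> {poly R}) :=
  (forall j, (size (A j) <= n j)%N) /\
  forall k : nat, (k < msize n)%N ->
    (\sum_(j < r) \int[muj j]_y ((y : R) ^+ k * (A j).[y])%:E
       = (if k == (msize n).-1 then 1 else 0)%:E)%E.

Definition Qfun (w : 'I_r -> R -> R) (A : 'I_r -> {poly R}) (y : R) : R :=
  \sum_(j < r) (A j).[y] * w j y.

(** The path: n_0 = 0, n_{l+1} = n_l + e_{i_l}; so (n_l)_j = #{k < l | i_k = j}. *)
Definition pathidx (i : nat -> 'I_r) (l : nat) : 'I_r -> nat :=
  fun j => (\sum_(k < l) (i k == j))%N.

Definition pseq (P : ('I_r -> nat) -> {poly R}) (i : nat -> 'I_r) (l : nat)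
  : {poly R} := P (pathidx i l).

Definition qseq (A : ('I_r -> nat) -> 'I_r -> {poly R}) (w : 'I_r -> R -> R)
    (i : nat -> 'I_r) (l : nat) (y : R) : R :=
  Qfun w (A (pathidx i l.+1)) y.

Definition CDkernel P A w i (n : nat) (x y : R) : R :=
  \sum_(j < n) (pseq P i j).[x] * qseq A w i j y.

Definition Gop (mu : measR) P A w i (n : nat) (f : {poly R}) (x : R) : R :=
  (CDkernel P A w i n x x)^-1 *
  Rintegral mu setT (fun y : R =>
     CDkernel P A w i n x y * CDkernel P A w i n y x * f.[y]).

End MOP.

Definition in_msupp (R : realType)
    (mu : {measure set (measurableTypeR R) -> \bar R}) (x : R) : Prop :=
  forall e : R, 0 < e -> (0 < mu [set y : R | (x - e < y < x + e)%R])%E.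

(* Main.v *)
Require Import Defs.
From HB Require Import structures.
From mathcomp Require Import all_boot all_order all_algebra.
From mathcomp Require Import all_classical all_reals all_analysis.
From mathcomp Require Import measurable_realfun lebesgue_measure lebesgue_integral.
From mathcomp Require Import ring lra zify.
Import Order.TTheory GRing.Theory Num.Theory.
Import numFieldNormedType.Exports.
Local Open Scope classical_set_scope.
Local Open Scope ring_scope.

Section CoV.
Context d (T : measurableType d) (R : realType).
Variables (mu nu : {measure set T -> \bar R}) (w : T -> R).
Hypothesis mw : measurable_fun setT w.
Hypothesis w0 : forall x, 0 <= w x.
Hypothesis hd : forall E, measurable E -> nu E = (\int[mu]_(y in E) (w y)%:E)%E.
Import HBNNSimple.
Local Open Scope ereal_scope.

Lemma cov (f : T -> \bar R) (f0 : forall x, 0 <= f x) (mf : measurable_fun setT f) :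
  \int[mu]_x (f x * (w x)%:E) = \int[nu]_x f x.
Proof.
set g := fun x => (w x)%:E.
have mE : measurable (setT : set T) by [].
pose h := nnsfun_approx mE mf.
have mg : measurable_fun setT g by exact/measurable_EFinP.
have -> : \int[nu]_x f x =
    lim (\int[nu]_x (EFin \o h n) x @[n --> \oo]).
  have fE x : f x = lim ((EFin \o h n) x @[n --> \oo]).
    by apply/esym/cvg_lim => //; exact: cvg_nnsfun_approx.
  under eq_integral => x _ do rewrite fE.
  apply: monotone_convergence => //.
  - move=> n; apply/measurable_EFinP.
    by apply: (measurable_funS measurableT) => //; exact/measurable_funP.
  - by move=> n x Ex //=; rewrite lee_fin.
  - by move=> x Ex a b ab; rewrite lee_fin; exact/lefP/nd_nnsfun_approx.
have -> : \int[mu]_x (f x * g x) =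
    lim (\int[mu]_x ((EFin \o h n) \* g) x @[n --> \oo]).
  have fg x : f x * g x = lim (((EFin \o h n) \* g) x @[n --> \oo]).
    by apply/esym/cvg_lim => //; apply: cvgeZr;
      [by []|exact: cvg_nnsfun_approx].
  under eq_integral => x _ do rewrite fg.
  apply: monotone_convergence => [//| | |].
  - move=> n; apply/emeasurable_funM => //.
    exact/measurable_EFinP.
  - by move=> n x Ex /=; rewrite mule_ge0 ?lee_fin.
  - by move=> x Ex a b ab/=; rewrite lee_wpmul2r ?lee_fin//; exact/lefP/nd_nnsfun_approx.
suff suf n : \int[mu]_x ((EFin \o h n) x * g x) =
    \int[nu]_x (EFin \o h n) x.
  by under eq_fun do rewrite suf.
transitivity (\int[nu]_x
   (\sum_(y \in range (h n)) (y * \1_(h n @^-1` [set y]) x)%:E)); last first.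
  by apply: eq_integral => t tE; rewrite /= fimfunE -fsumEFin.
have indich m r : measurable_fun setT (fun x => (r * \1_(h m @^-1` [set r]) x)%:E).
  by apply: (measurable_comp measurableT) => //; exact: measurable_funM.
rewrite ge0_integral_fsum//; last by move=> m y Ey; exact: nnfun_muleindic_ge0.
transitivity (\int[mu]_x (\sum_(y \in range (h n))
    (y * \1_(h n @^-1` [set y]) x)%:E * g x)).
  under [RHS]eq_integral => x xE.
    rewrite -ge0_mule_fsuml => [|y]; last exact: nnfun_muleindic_ge0.
    rewrite fsumEFin // -(fimfunE _ x); over.
  by [].
rewrite ge0_integral_fsum//; last 2 first.
  - by move=> y; apply: emeasurable_funM => //.
  - by move=> m y Ey; rewrite mule_ge0 ?lee_fin//; have := nnfun_muleindic_ge0 (h n) m y; rewrite -EFinM lee_fin.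
apply: eq_fsbigr => r rhn.
under [RHS]eq_integral do rewrite EFinM.
rewrite integralZl_indic_nnsfun => //.
under eq_integral do rewrite EFinM -muleA.
rewrite ge0_integralZl//.
- under eq_integral do rewrite muleC.
  rewrite (eq_integral (g \_ (h n @^-1` [set r]))); last first.
    by move=> x xE; rewrite epatch_indic.
  rewrite -integral_mkcondr -hd ?integral_indic ?setIT//.
  by rewrite setTI.
- apply: emeasurable_funM; first exact/measurable_EFinP.
  by [].
- by move=> t Et; rewrite mule_ge0 ?lee_fin.
- by move: rhn; rewrite inE => -[t _ <-]; rewrite lee_fin.
Qed.

Lemma dens (f : T -> R) (mf : measurable_fun setT f)
  (fi : nu.-integrable setT (EFin \o f)) :
  mu.-integrable setT (EFin \o (fun y => (f y * w y)%R)) /\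
  \int[mu]_x ((f x * w x)%R%:E) = \int[nu]_x (f x)%:E.
Proof.
have mfw : measurable_fun setT (fun y => (f y * w y)%R) by exact: measurable_funM.
have abs x : `|(f x * w x)%R%:E| = `|(f x)%:E| * (w x)%:E.
  by rewrite -EFinM !abse_EFin normrM (ger0_norm (w0 x)).
have pos z : (EFin \o (fun y => (f y * w y)%R))^\+ z = (EFin \o f)^\+ z * (w z)%:E.
  rewrite !funeposE /=; case: (leP 0%R (f z)) => hf.
    by rewrite !max_l ?lee_fin ?mulr_ge0// EFinM.
  rewrite max_r; last by rewrite lee_fin mulr_le0_ge0 // ltW.
  by rewrite max_r ?mul0e // lee_fin ltW.
have neg z : (EFin \o (fun y => (f y * w y)%R))^\- z = (EFin \o f)^\- z * (w z)%:E.
  rewrite !funenegE /=; case: (leP 0%R (f z)) => hf.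
    by rewrite !max_r ?lee_fin ?mul0e ?oppr_le0 ?mulr_ge0 ?oppr_le0.
  rewrite max_l; last by rewrite lee_fin oppr_ge0 mulr_le0_ge0 // ltW.
  by rewrite max_l ?lee_fin ?oppr_ge0 ?ltW// -EFinM mulNr.
have mfE : measurable_fun setT (EFin \o f) by exact/measurable_EFinP.
split.
  apply/integrableP; split; first exact/measurable_EFinP.
  under eq_integral do rewrite abs.
  rewrite cov//; last by apply: measurableT_comp => //.
  by move/integrableP: fi => [].
rewrite integralE (integralE _ _ (EFin \o f)).
under eq_integral do rewrite pos.
under [X in _ - X = _]eq_integral do rewrite neg.
rewrite !cov//.
- exact: measurable_funeneg.
- exact: measurable_funepos.
Qed.
End CoV.

Section Integ.
Variable R : realType.
Local Notation RB := (measurableTypeR R).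
Variable mu : {measure set RB -> \bar R}.

Definition Good (h : R -> R) := mu.-integrable setT (EFin \o (h : RB -> R)).
Definition Igl (h : R -> R) := Rintegral mu setT (h : RB -> R).

Lemma GoodD [f g] : Good f -> Good g -> Good (fun y => f y + g y).
Proof.
move=> hf hg; apply: eq_integrable (integrableD _ hf hg) => //.
Qed.

Lemma IglD [f g] : Good f -> Good g -> Igl (fun y => f y + g y) = Igl f + Igl g.
Proof. by move=> hf hg; rewrite /Igl RintegralD. Qed.

Lemma GoodZ c [f] : Good f -> Good (fun y => c * f y).
Proof.
move=> hf; apply: eq_integrable (integrableZl _ c hf) => //.
Qed.

Lemma IglZ c [f] : Good f -> Igl (fun y => c * f y) = c * Igl f.
Proof. by move=> hf; rewrite /Igl RintegralZl. Qed.

Lemma Good0 : Good (fun _ => 0).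
Proof. apply/integrableP; split; first exact: measurable_cst.
by rewrite (eq_integral (cst 0%E)) ?integral0 ?ltry // => x _ /=; rewrite normr0. Qed.

Lemma Igl0 : Igl (fun _ => 0) = 0.
Proof. by rewrite /Igl /Rintegral integral0. Qed.

Lemma Good_ext [f g] : (forall y, f y = g y) -> Good f -> Good g.
Proof. by move=> e; rewrite (_ : f = g) //; apply/funext. Qed.

Lemma Igl_ext [f g] : (forall y, f y = g y) -> Igl f = Igl g.
Proof. by move=> e; rewrite (_ : f = g) //; apply/funext. Qed.
Lemma Good_sum (I : Type) (s : seq I) (F : I -> R -> R) :
  (forall a, Good (F a)) ->
  Good (fun y => \sum_(a <- s) F a y) /\
  Igl (fun y => \sum_(a <- s) F a y) = \sum_(a <- s) Igl (F a).
Proof.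
move=> hF; elim: s => [|a s [IH1 IH2]].
  split; first by apply: (Good_ext _ Good0) => y; rewrite big_nil.
  transitivity (Igl (fun _ => 0)); first by apply: Igl_ext => y; rewrite big_nil.
  by rewrite Igl0 big_nil.
split; first by apply: (Good_ext _ (GoodD (hF a) IH1)) => y; rewrite big_cons.
by rewrite big_cons -IH2 -IglD //; apply: Igl_ext => y; rewrite big_cons.
Qed.

End Integ.
Arguments Good {R} mu h.
Arguments Igl {R} mu h.
Arguments Good_sum {R} mu {I} s F.
Arguments Good_ext {R mu f g}.
Arguments Igl_ext {R mu f g}.
Arguments GoodD {R mu f g}.
Arguments IglD {R mu f g}.
Arguments GoodZ {R mu} c {f}.
Arguments IglZ {R mu} c {f}.

Section Main.
Variables (R : realType) (r : nat).
Local Notation RB := (measurableTypeR R).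
Variables (mu : {measure set RB -> \bar R}) (muj : 'I_r -> {measure set RB -> \bar R})
  (w : 'I_r -> R -> R)
  (hw_meas : forall j : 'I_r, measurable_fun setT (w j : RB -> R))
  (hw_ge0 : forall (j : 'I_r) (y : R), 0 <= w j y)
  (hdens : forall (j : 'I_r) (E : set RB), measurable E ->
     muj j E = (\int[mu]_(y in E) (w j y)%:E)%E)
  (hmom : forall (j : 'I_r) (k : nat),
     (muj j).-integrable setT (fun y : RB => ((y : R) ^+ k)%:E)).

Lemma poly_meas (g : {poly R}) : measurable_fun setT (fun y : RB => g.[y]).
Proof. apply: continuous_measurable_fun. exact: continuous_horner. Qed.

Lemma poly_int s (g : {poly R}) : (muj s).-integrable setT (EFin \o (fun y : RB => g.[y])).
Proof.
have hs : (muj s).-integrable setT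
    (fun y : RB => \sum_(k < size g) ((g`_k)%:E * ((y:R)^+k)%:E)%E).
  by apply: integrable_sum => // k _; exact: integrableZl.
apply: eq_integrable hs => // y _ /=.
by rewrite horner_coef -sumEFin; apply: eq_bigr => k _; rewrite EFinM.
Qed.

Definition Ls s (g : {poly R}) := Rintegral (muj s) setT (fun y : RB => g.[y]).

Lemma Ls_int s g : (\int[muj s]_y (g.[y])%:E = (Ls s g)%:E)%E.
Proof. by rewrite /Ls /Rintegral fineK //; apply: integrable_fin_num => //; exact: poly_int. Qed.

Lemma LsD s g h : Ls s (g + h) = Ls s g + Ls s h.
Proof.
rewrite /Ls -RintegralD //; try exact: poly_int.
by congr Rintegral; apply/funext => y; rewrite hornerD.
Qed.

Lemma LsZ s c g : Ls s (c *: g) = c * Ls s g.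
Proof.
rewrite /Ls -RintegralZl //; try exact: poly_int.
by congr Rintegral; apply/funext => y; rewrite hornerZ.
Qed.

Lemma Ls_sum s (I : Type) (sq : seq I) (F : I -> {poly R}) :
  Ls s (\sum_(a <- sq) F a) = \sum_(a <- sq) Ls s (F a).
Proof.
elim: sq => [|a sq IH]; last by rewrite !big_cons LsD IH.
rewrite !big_nil /Ls (_ : (fun y => _) = cst 0); last by apply/funext => y; rewrite horner0.
by rewrite /Rintegral integral0.
Qed.

Lemma Good_pw s (g : {poly R}) : Good mu (fun y => g.[y] * w s y) /\
  Igl mu (fun y => g.[y] * w s y) = Ls s g.
Proof.
have [h1 h2] := @dens _ _ _ mu (muj s) (w s) (hw_meas s) (hw_ge0 s) (hdens s) _ (poly_meas g) (poly_int s g).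
split => //; by rewrite /Igl /Rintegral /Ls /Rintegral h2.
Qed.


Lemma polyE (g : {poly R}) : g = \sum_(k < size g) g`_k *: 'X^k.
Proof. by rewrite -poly_def coefK. Qed.

Variables (P : ('I_r -> nat) -> {poly R}) (hP : forall n, typeII muj n (P n))
  (A : ('I_r -> nat) -> 'I_r -> {poly R}) (hA : forall n, typeI muj n (A n))
  (i : nat -> 'I_r).

Lemma msize_path l : msize (pathidx i l) = l.
Proof.
rewrite /msize /pathidx exchange_big /=.
rewrite (eq_bigr (fun _ => 1%N)); first by rewrite sum1_card card_ord.
move=> k _; rewrite (bigD1 (i k)) //= eqxx big1 // => j /negbTE.
by rewrite eq_sym => ->.
Qed.

Lemma path_mono l m s : (l <= m)%N -> (pathidx i l s <= pathidx i m s)%N.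
Proof.
move=> lm; rewrite /pathidx -(subnKC lm) big_split_ord /=.
exact: leq_addr.
Qed.

Lemma size_p l : size (pseq P i l) = l.+1.
Proof. by have [_ -> _] := hP (pathidx i l); rewrite msize_path. Qed.

Lemma monic_p l : pseq P i l \is monic.
Proof. by have [-> _ _] := hP (pathidx i l). Qed.

Lemma LsII n s k : (k < n s)%N -> Ls s ('X^k * P n) = 0.
Proof.
move=> kn; have [_ _ /(_ s k kn) h] := hP n.
have : ((Ls s ('X^k * P n))%:E = 0)%E.
  by rewrite -Ls_int -h; apply: eq_integral => y _; rewrite hornerM hornerXn.
by case.
Qed.

Lemma LsI n k : (k < msize n)%N ->
  \sum_(s < r) Ls s ('X^k * A n s) = if k == (msize n).-1 then 1 else 0.
Proof.
move=> kn; have [_ /(_ k kn) h] := hA n.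
have : ((\sum_(s < r) Ls s ('X^k * A n s))%:E =
   (if k == (msize n).-1 then 1 else 0)%:E)%E.
  rewrite -h -sumEFin; apply: eq_bigr => s _.
  by rewrite -Ls_int; apply: eq_integral => y _; rewrite hornerM hornerXn.
by case.
Qed.

Lemma pq_good (g : {poly R}) l : Good mu (fun y => g.[y] * qseq A w i l y) /\
  Igl mu (fun y => g.[y] * qseq A w i l y) =
  \sum_(s < r) Ls s (g * A (pathidx i l.+1) s).
Proof.
have e y : g.[y] * qseq A w i l y =
    \sum_(s < r) (g * A (pathidx i l.+1) s).[y] * w s y.
  rewrite /qseq /Qfun mulr_sumr; apply: eq_bigr => s _.
  by rewrite hornerM mulrA.
have [h1 h2] := Good_sum mu (index_enum 'I_r)
  (fun s y => (g * A (pathidx i l.+1) s).[y] * w s y) (fun s => (Good_pw s _).1).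
split; first exact: Good_ext h1.
rewrite (Igl_ext e) h2; apply: eq_bigr => s _; exact: (Good_pw s _).2.
Qed.

Lemma bo m l : \sum_(s < r) Ls s (pseq P i m * A (pathidx i l.+1) s) = (m == l)%:R.
Proof.
case: (ltnP l m) => lm.
  rewrite big1; last first.
    move=> s _; rewrite [A _ s]polyE mulr_sumr Ls_sum big1 // => k _.
    rewrite -scalerAr LsZ /pseq (mulrC (P _)) LsII ?mulr0 //.
    have [hs _] := hA (pathidx i l.+1).
    apply: (leq_trans (ltn_ord k)); apply: (leq_trans (hs s)).
    exact: path_mono.
  by rewrite gtn_eqF.
under eq_bigr => s _.
  rewrite [pseq P i m]polyE size_p mulr_suml Ls_sum.
  under eq_bigr => k _ do rewrite -scalerAl LsZ.
  over.
rewrite /= exchange_big /=.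
under eq_bigr => k _.
  rewrite -mulr_sumr LsI; last by rewrite msize_path ltnS (leq_trans _ lm) // -ltnS.
  rewrite msize_path /=; over.
rewrite big_ord_recr /= big1; last first.
  by move=> k _; rewrite ifN ?mulr0 // neq_ltn (leq_trans (ltn_ord k) lm).
rewrite add0r; case: eqP => [->|_]; last by rewrite mulr0.
have := monic_p l; rewrite monicE lead_coefE size_p /= => /eqP ->.
by rewrite mulr1.
Qed.

Lemma BO m l : Good mu (fun y => (pseq P i m).[y] * qseq A w i l y) /\
  Igl mu (fun y => (pseq P i m).[y] * qseq A w i l y) = (m == l)%:R.
Proof. by have [h1 h2] := pq_good (pseq P i m) l; rewrite h2 bo. Qed.

Variables (J : nat -> nat -> R)
  (hJ0 : forall l k : nat, (l.+1 < k)%N -> J l k = 0)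
  (hJ : forall l : nat,
     'X * pseq P i l = \sum_(k < l.+2) J l k *: pseq P i k)
  (ha : forall Rb : nat, exists B : R, forall a b : nat,
     (a <= b + Rb)%N -> (b <= a + Rb)%N -> `|J a b| <= B).

Lemma sum_ext0 (V : zmodType) (F : nat -> V) a N : (a <= N)%N ->
  (forall t, (a <= t)%N -> F t = 0) -> \sum_(t < a) F t = \sum_(t < N) F t.
Proof.
move=> aN h; rewrite -(subnKC aN) big_split_ord /= [X in _ + X]big1 ?addr0 //.
by move=> t _; apply: h; exact: leq_addr.
Qed.

Fixpoint E (m k t : nat) : R :=
  if m is m'.+1 then \sum_(s < k + m'.+1) E m' k s * J s t else (t == k)%:R.

Lemma E_zero m k t : (k + m < t)%N -> E m k t = 0.
Proof.
elim: m t => [|m IH] t /=; first by rewrite addn0 => kt; rewrite gtn_eqF.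
move=> h; rewrite big1 // => s _; rewrite hJ0 ?mulr0 //.
by have := ltn_ord s; lia.
Qed.

Lemma E_exp m k : 'X^m * pseq P i k = \sum_(t < k + m.+1) E m k t *: pseq P i t.
Proof.
elim: m => [|m IH].
  rewrite expr0 mul1r addn1 big_ord_recr /= eqxx scale1r big1 ?add0r // => t _.
  by rewrite /= ltn_eqF ?scale0r.
rewrite exprS -mulrA IH mulr_sumr.
under eq_bigr => s _.
  rewrite -scalerAr hJ (@sum_ext0 _ (fun j => J s j *: pseq P i j) _ (k + m.+2)).
  - rewrite scaler_sumr; under eq_bigr => j _ do rewrite scalerA.
    over.
  - by have := ltn_ord s; lia.
  - by move=> j hj; rewrite hJ0 ?scale0r.
rewrite /= exchange_big /=; apply: eq_bigr => j _.
by rewrite scaler_suml.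
Qed.

Lemma count_ind (K a c : nat) :
  \sum_(t < K) ((a <= t + c)%N)%:R = ((K - (a - c))%N)%:R :> R.
Proof.
elim: K => [|K IH]; first by rewrite big_ord0.
rewrite big_ord_recr /= IH -natrD; congr (_%:R).
case: leqP => h /=; lia.
Qed.

Lemma Ebound m L : exists B, 0 <= B /\
  forall k t, (k <= t + L)%N -> `|E m k t| <= B.
Proof.
elim: m L => [|m IH] L.
  by exists 1; split => // k t _ /=; case: eqP; rewrite ?normr1 ?normr0.
have [B1 [B10 hB1]] := IH L.+1.
have [B2' hB2'] := ha (L + m.+1).
pose B2 := Num.max B2' 0.
have hB2 a b : (a <= b + (L + m.+1))%N -> (b <= a + (L + m.+1))%N -> `|J a b| <= B2.
  by move=> h1 h2; rewrite le_max hB2'.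
have B20 : 0 <= B2 by rewrite le_max lexx orbT.
exists ((L + m.+2)%:R * (B1 * B2)); split; first by rewrite !mulr_ge0.
move=> k t hkt /=.
apply: (le_trans (ler_norm_sum _ _ _)).
apply: (@le_trans _ _ (\sum_(s < k + m.+1) ((t <= s + 1)%N)%:R * (B1 * B2))).
  apply: ler_sum => s _; case: (leqP t (s + 1)) => hts.
    rewrite mul1r normrM; apply: ler_pM => //.
      by apply: hB1; lia.
    by apply: hB2; have := ltn_ord s; lia.
  by rewrite hJ0 ?mulr0 ?normr0 ?mul0r // -addn1.
rewrite -mulr_suml count_ind ler_wpM2r ?mulr_ge0 // ler_nat; lia.
Qed.

Lemma Ebound_all M L : exists B, 0 <= B /\
  forall m k t, (m < M)%N -> (k <= t + L)%N -> `|E m k t| <= B.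
Proof.
elim: M => [|M [B [B0 hB]]]; first by exists 0; split => // m k t; rewrite ltn0.
have [B' [B'0 hB']] := Ebound M L.
exists (Num.max B B'); split; first by rewrite le_max B0.
move=> m k t; rewrite ltnS leq_eqVlt => /orP[/eqP -> | hm] hk.
  by rewrite le_max hB' ?orbT.
by rewrite le_max hB.
Qed.

Variable f : {poly R}.

Definition Ef k t := \sum_(m < size f) f`_m * E m k t.

Lemma Ef_zero k t : (k + size f <= t)%N -> Ef k t = 0.
Proof.
move=> h; rewrite /Ef big1 // => m _; rewrite E_zero ?mulr0 //.
by have := ltn_ord m; lia.
Qed.

Lemma Ef_exp k N : (k + size f <= N)%N ->
  pseq P i k * f = \sum_(t < N) Ef k t *: pseq P i t.
Proof.
move=> hN; rewrite {1}[f]polyE mulr_sumr.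
under eq_bigr => m _.
  rewrite -scalerAr (mulrC (pseq P i k)) E_exp.
  rewrite (@sum_ext0 _ (fun t => E m k t *: pseq P i t) _ N); first last.
  - by move=> t ht; rewrite E_zero ?scale0r //; lia.
  - by have := ltn_ord m; lia.
  rewrite scaler_sumr; under eq_bigr => t _ do rewrite scalerA.
  over.
rewrite /= exchange_big /=; apply: eq_bigr => t _.
by rewrite scaler_suml.
Qed.

Lemma Ef_bound : exists B, 0 <= B /\ forall k t, (k <= t)%N -> `|Ef k t| <= B.
Proof.
have [B [B0 hB]] := Ebound_all (size f) 0.
exists (\sum_(m < size f) `|f`_m| * B); split.
  by apply: sumr_ge0 => m _; rewrite mulr_ge0.
move=> k t hkt; apply: (le_trans (ler_norm_sum _ _ _)).
apply: ler_sum => m _; rewrite normrM ler_wpM2l //.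
by apply: hB => //; rewrite addn0.
Qed.

Lemma Good_lin {I : Type} (s : seq I) (c : I -> R) (G : I -> R -> R) :
  (forall a, Good mu (G a)) ->
  Good mu (fun y => \sum_(a <- s) c a * G a y) /\
  Igl mu (fun y => \sum_(a <- s) c a * G a y) = \sum_(a <- s) c a * Igl mu (G a).
Proof.
move=> hG; have [h1 h2] := Good_sum mu s (fun a y => c a * G a y) (fun a => GoodZ (c a) (hG a)).
split => //; rewrite h2; apply: eq_bigr => a _; exact: IglZ.
Qed.

Lemma sum_delta0 (F : nat -> R) N j :
  \sum_(t < N) F t * ((t : nat) == j)%:R = if (j < N)%N then F j else 0.
Proof.
elim: N => [|N IH]; first by rewrite big_ord0.
rewrite big_ord_recr /= IH.
case: (ltngtP j N) => h.
- by rewrite ifT ?mulr0 ?addr0 //; lia.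
- by rewrite ifF ?mulr0 ?addr0 //; apply/negbTE; lia.
- by rewrite h ltnSn mulr1 add0r.
Qed.

Lemma sum_delta (F : nat -> R) N j : (forall t, (N <= t)%N -> F t = 0) ->
  \sum_(t < N) F t * ((t : nat) == j)%:R = F j.
Proof.
move=> hF; rewrite sum_delta0; case: ltnP => // hj; by rewrite hF.
Qed.

Local Notation K := (CDkernel P A w i).

Lemma integ n x : Good mu (fun y => K n x y * K n y x * f.[y]) /\
  Igl mu (fun y => K n x y * K n y x * f.[y]) =
  \sum_(j < n) \sum_(k < n) (pseq P i j).[x] * qseq A w i k x * Ef k j.
Proof.
pose G j k y := \sum_(t < k + size f) Ef k t * ((pseq P i t).[y] * qseq A w i j y).
have e y : K n x y * K n y x * f.[y] = \sum_(j < n) \sum_(k < n)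
    ((pseq P i j).[x] * qseq A w i k x) * G j k y.
  rewrite /CDkernel mulr_suml mulr_suml; apply: eq_bigr => j _.
  rewrite mulr_sumr mulr_suml; apply: eq_bigr => k _.
  rewrite /G.
  have -> : \sum_(t < k + size f) Ef k t * ((pseq P i t).[y] * qseq A w i j y)
     = (pseq P i k * f).[y] * qseq A w i j y.
    rewrite (@Ef_exp k (k + size f) (leqnn _)) horner_sum mulr_suml; apply: eq_bigr => t _.
    by rewrite hornerZ mulrA.
  rewrite hornerM; ring.
have hG j k : Good mu (G j k) /\ Igl mu (G j k) = Ef k j.
  have [h1 h2] := Good_lin (index_enum 'I_(k + size f)) (fun t => Ef k t)
     (fun t y => (pseq P i t).[y] * qseq A w i j y) (fun t => (BO t j).1).
  split => //; rewrite /G h2.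
  under eq_bigr => t _ do rewrite (BO t j).2.
  by apply: sum_delta => t ht; apply: Ef_zero.
have hL j : Good mu (fun y => \sum_(k < n) ((pseq P i j).[x] * qseq A w i k x) * G j k y) /\
   Igl mu (fun y => \sum_(k < n) ((pseq P i j).[x] * qseq A w i k x) * G j k y) =
   \sum_(k < n) (pseq P i j).[x] * qseq A w i k x * Ef k j.
  have [h1 h2] := Good_lin (index_enum 'I_n) (fun k : 'I_n => (pseq P i j).[x] * qseq A w i k x)
     (fun k => G j k) (fun k => (hG j k).1).
  split => //; rewrite h2; apply: eq_bigr => k _; by rewrite (hG j k).2.
have [h1 h2] := Good_sum mu (index_enum 'I_n) _ (fun j => (hL j).1).
split; first exact: Good_ext h1.
rewrite (Igl_ext e) h2; apply: eq_bigr => j _; exact: (hL j).2.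
Qed.

Lemma diff_eq n x : f.[x] * K n x x - Igl mu (fun y => K n x y * K n y x * f.[y]) =
  \sum_(k < n) qseq A w i k x *
     \sum_(t < (size f).+1) Ef k (n + t) * (pseq P i (n + t)).[x].
Proof.
have e1 : f.[x] * K n x x = \sum_(k < n) qseq A w i k x *
    \sum_(t < n + (size f).+1) Ef k t * (pseq P i t).[x].
  rewrite /CDkernel mulr_sumr; apply: eq_bigr => k _.
  have hk : (k + size f <= n + (size f).+1)%N by have := ltn_ord k; lia.
  have -> : f.[x] * ((pseq P i k).[x] * qseq A w i k x) =
     qseq A w i k x * (pseq P i k * f).[x] by rewrite hornerM; ring.
  rewrite (@Ef_exp k _ hk) horner_sum; congr (_ * _); apply: eq_bigr => t _.
  by rewrite hornerZ.
have e2 : Igl mu (fun y => K n x y * K n y x * f.[y]) = \sum_(k < n) qseq A w i k x *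
    \sum_(t < n) Ef k t * (pseq P i t).[x].
  rewrite (integ n x).2 exchange_big /=; apply: eq_bigr => k _.
  rewrite mulr_sumr; apply: eq_bigr => t _; ring.
rewrite e1 e2 -sumrB; apply: eq_bigr => k _.
by rewrite big_split_ord /= mulrDr addrAC subrr add0r.
Qed.

Definition Mx n x := \big[Num.max/0]_(n - (size f).+1 <= l < n)
   \big[Num.max/0]_(n <= l' < n + (size f).+2)
     (`|qseq A w i l x * (pseq P i l').[x]| / K n x x).

Lemma le_M2 (F : nat -> nat -> R) a b c d k t : (a <= k < b)%N -> (c <= t < d)%N ->
  F k t <= \big[Num.max/0]_(a <= l < b) \big[Num.max/0]_(c <= l' < d) F l l'.
Proof.
move=> hk ht.
apply: (le_trans _ (le_bigmax_seq 0 k xpredT _ _ _)) => //; last by rewrite mem_index_iota.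
by apply: (le_bigmax_seq 0 t xpredT) => //; rewrite mem_index_iota.
Qed.

Lemma Mx_ge0 n x : 0 <= Mx n x.
Proof. exact: bigmax_ge_id. Qed.

Lemma bound n x B : 0 < K n x x -> 0 <= B -> (forall k t, (k <= t)%N -> `|Ef k t| <= B) ->
  `|Gop mu P A w i n f x - f.[x]| <= ((size f).+1)%:R * ((size f).+1)%:R * B * Mx n x.
Proof.
move=> Kp B0 hB.
have -> : Gop mu P A w i n f x - f.[x] =
    - ((f.[x] * K n x x - Igl mu (fun y => K n x y * K n y x * f.[y])) / K n x x).
  rewrite /Gop -/(Igl mu _) mulrBl mulfK ?gt_eqF //; ring.
rewrite normrN diff_eq mulr_suml.
apply: (le_trans (ler_norm_sum _ _ _)).
apply: (@le_trans _ _ (\sum_(k < n) ((n <= k + (size f).+1)%N)%:R *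
   (((size f).+1)%:R * (B * Mx n x)))).
  apply: ler_sum => k _.
  rewrite mulr_sumr mulr_suml.
  apply: (le_trans (ler_norm_sum _ _ _)).
  apply: (@le_trans _ _ (\sum_(t < (size f).+1) ((n <= k + (size f).+1)%N)%:R * (B * Mx n x))); last first.
    by rewrite sumr_const card_ord le_eqVlt; apply/orP; left; apply/eqP; ring.
  apply: ler_sum => t _.
  case: (leqP n (k + (size f).+1)) => hk.
    rewrite mul1r (_ : _ / _ = Ef k (n + t) * (qseq A w i k x * (pseq P i (n + t)).[x] / K n x x)); last by ring.
    rewrite normrM ler_pM //.
      by apply: hB; have := ltn_ord k; lia.
    rewrite normrM normfV (gtr0_norm Kp).
    apply: (le_M2 (fun l l' => `|qseq A w i l x * (pseq P i l').[x]| / K n x x)).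
      by have := ltn_ord k; lia.
    by have := ltn_ord t; lia.
  rewrite Ef_zero; last lia.
  by rewrite mul0r mulr0 mul0r normr0 mul0r.
rewrite -mulr_suml count_ind.
have -> : (size f).+1%:R * (size f).+1%:R * B * Mx n x =
   (size f).+1%:R * ((size f).+1%:R * (B * Mx n x)) by ring.
rewrite ler_wpM2r ?mulr_ge0 ?Mx_ge0 // ler_nat; lia.
Qed.

Lemma final x : (\forall n \near \oo, 0 < K n x x) ->
  (fun n => Mx n x) @ \oo --> 0 ->
  (fun n => Gop mu P A w i n f x) @ \oo --> f.[x].
Proof.
move=> hb hM.
have [B [B0 hB]] := Ef_bound.
pose C := ((size f).+1)%:R * ((size f).+1)%:R * B.
apply: (@squeeze_cvgr _ _ _ _ (fun n => f.[x] - C * Mx n x) (fun n => f.[x] + C * Mx n x)).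
- apply: filterS hb => n Kp.
  have := bound n x B Kp B0 hB; rewrite -/C ler_norml => /andP[h1 h2].
  by apply/andP; split; lra.
- have := cvgB (cvg_cst f.[x]) (cvgM (cvg_cst C) hM).
  suff : (fun n => f.[x] - C * Mx n x) @ \oo --> f.[x] - C * 0 by rewrite mulr0 subr0.
  apply: cvgB; first exact: cvg_cst.
  by apply: cvgM; [exact: cvg_cst|exact: hM].
- suff : (fun n => f.[x] + C * Mx n x) @ \oo --> f.[x] + C * 0 by rewrite mulr0 addr0.
  apply: cvgD; first exact: cvg_cst.
  by apply: cvgM; [exact: cvg_cst|exact: hM].
Qed.

End Main.

Theorem theorem5 (R : realType) (r : nat) (hr : (1 <= r)%N)
  (mu : {measure set (measurableTypeR R) -> \bar R})
  (muj : 'I_r -> {measure set (measurableTypeR R) -> \bar R})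
  (w : 'I_r -> R -> R)
  (hw_meas : forall j : 'I_r,
     measurable_fun setT (w j : measurableTypeR R -> R))
  (hw_ge0 : forall (j : 'I_r) (y : R), 0 <= w j y)
  (hdens : forall (j : 'I_r) (E : set (measurableTypeR R)), measurable E ->
     muj j E = (\int[mu]_(y in E) (w j y)%:E)%E)
  (hmom : forall (j : 'I_r) (k : nat),
     (muj j).-integrable setT (fun y : measurableTypeR R => ((y : R) ^+ k)%:E))
  (hperf : perfect muj)
  (P : ('I_r -> nat) -> {poly R}) (hP : forall n, typeII muj n (P n))
  (A : ('I_r -> nat) -> 'I_r -> {poly R}) (hA : forall n, typeI muj n (A n))
  (i : nat -> 'I_r)
  (J : nat -> nat -> R)
  (hJ0 : forall l k : nat, (l.+1 < k)%N -> J l k = 0)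
  (hJ : forall l : nat,
     'X * pseq P i l = \sum_(k < l.+2) J l k *: pseq P i k)
  (x : R) (hx : in_msupp mu x)
  (ha : forall Rb : nat, exists B : R, forall a b : nat,
     (a <= b + Rb)%N -> (b <= a + Rb)%N -> `|J a b| <= B)
  (hb : \forall n \near \oo, 0 < CDkernel P A w i n x x)
  (hc : forall N : nat, (1 <= N)%N ->
     (fun n : nat =>
        \big[Num.max/0]_(n - N <= l < n)
          \big[Num.max/0]_(n <= l' < n + N.+1)
            (`|qseq A w i l x * (pseq P i l').[x]| / CDkernel P A w i n x x))
       @ \oo --> 0) :
  forall f : {poly R}, (fun n : nat => Gop mu P A w i n f x) @ \oo --> f.[x].
Proof.
move=> f.
have := @final R r mu muj w hw_meas hw_ge0 hdens hmom P hP A hA i J hJ0 hJ ha f x hb.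
apply; exact: (hc (size f).+1 (ltn0Sn _)).
Qed.
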